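(* Let $\gamma,\beta,\mu>0$ and, for $t\ge0$, $k\in\mathbb{R}^3$ with $\lambda_+(k)\neq\lambda_-(k)$, let $\mathcal N(t,k)$ be the $7\times7$ matrix \begin{equation*} \mathcal{N}=\begin{pmatrix} \frac{\lambda_+e^{\lambda_- t}-\lambda_-e^{\lambda_+ t}}{\lambda_+-\lambda_-} & -i\gamma{k}^T \frac{e^{\lambda_+ t}-e^{\lambda_- t}}{\lambda_+-\lambda_-} & 0 \\[2mm] -i\gamma k\frac{e^{\lambda_+ t}-e^{\lambda_- t}}{\lambda_+-\lambda_-} & \frac{\lambda_+e^{\lambda_+ t}-\lambda_-e^{\lambda_- t}}{\lambda_+-\lambda_-}\mathbf{I}_3 & -\beta\frac{e^{\lambda_+ t}-e^{\lambda_- t}}{\lambda_+-\lambda_-}\mathbf{I}_3\\[2mm] 0 & \beta\frac{e^{\lambda_+ t}-e^{\lambda_- t}}{\lambda_+-\lambda_-}\mathbf{I}_3 & \frac{\lambda_+e^{\lambda_- t}-\lambda_-e^{\lambda_+ t}}{\lambda_+-\lambda_-}\mathbf{I}_3 \end{pmatrix},\quad \lambda_\pm=-\tfrac{1}{2}\mu |k|^2\pm \tfrac{1}{2} \sqrt{\mu^2 |k|^4-4(\gamma^2|k|^2+\beta^2)}. \end{equation*} Then there exist constants $0<\epsilon<L$ such that, with $\mathbb{D}_0=\{|k|\le\epsilon\}$, $\mathbb{D}_1=\{\epsilon\le|k|\le L\}$, $\mathbb{D}_\infty=\{|k|\ge L\}$, the following entrywise bounds hold for $t\ge0$ and $k$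 (where $\mathcal N$ is defined). Over $\mathbb{D}_0$, \begin{equation*} |\mathcal{N}| \lesssim \begin{pmatrix} 1 & |k|d_3^T & 0 \\ |k|d_3 & \mathbf{I}_3 &\mathbf{I}_3 \\ 0 & \mathbf{I}_3 & \mathbf{I}_3 \end{pmatrix} e^{-\frac{1}{2}\mu |k|^2 t}. \end{equation*} Over $\mathbb{D}_\infty$, \begin{equation*} |\mathcal{N}| \lesssim \begin{pmatrix} 1 & |k|^{-1}d_3^T & 0 \\ |k|^{-1}d_3 & |k|^{-2}\mathbf{I}_3 & |k|^{-2}\mathbf{I}_3 \\ 0 & |k|^{-2}\mathbf{I}_3 & \mathbf{I}_3 \end{pmatrix} e^{-O(1) t} + \begin{pmatrix} |k|^{-2} & |k|^{-1}d_3^T & 0 \\ |k|^{-1}d_3 & \mathbf{I}_3 & |k|^{-2}\mathbf{I}_3 \\ 0 & |k|^{-2}\mathbf{I}_3 & |k|^{-2}\mathbf{I}_3 \end{pmatrix} e^{-O(1) |k|^2 t}. \end{equation*} Over $\mathbb{D}_1$, \begin{equation*} |\mathcal{N}| \lesssim \begin{pmatrix} 1 & d_3^T & 0 \\ d_3 & \mathbf{I}_3 & \mathbf{I}_3 \\ 0 & \mathbf{I}_3 & \mathbf{I}_3 \end{pmatrix} e^{-O(1) t}. \end{equation*}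
   Context: $|\mathcal N|$ denotes the matrix whose entries are the absolute values of those of $\mathcal N$; the inequalities are entrywise up to a constant. $d_3=(1,1,1)^T$; $\mathbf I_3$ is the $3\times3$ identity. $O(1)$ denotes a generic strictly positive constant independent of $t,k$; $A\lesssim B$ means $A\le CB$ for a constant $C$ independent of $t,k$. *)

(* Defs.v *)
From Stdlib Require Import Reals Lra Lia.
From Coquelicot Require Import Coquelicot.
Open Scope R_scope.

Definition Cexp (z : C) : C :=
  (exp (fst z) * cos (snd z), exp (fst z) * sin (snd z)).

Definition Csqrt_real (D : R) : C :=
  if Rle_dec 0 D then (sqrt D, 0) else (0, sqrt (- D)).

(* vector k in R^3 represented by its coordinates k 0, k 1, k 2 *)
Definition norm2 (k : nat -> R) : R := k 0%nat ^ 2 + k 1%nat ^ 2 + k 2%nat ^ 2.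
Definition knorm (k : nat -> R) : R := sqrt (norm2 k).

Definition disc (gam bet mu : R) (k : nat -> R) : R :=
  mu ^ 2 * knorm k ^ 4 - 4 * (gam ^ 2 * knorm k ^ 2 + bet ^ 2).

Definition lam_p (gam bet mu : R) (k : nat -> R) : C :=
  Cplus (RtoC (- (1/2) * mu * knorm k ^ 2))
        (Cmult (RtoC (1/2)) (Csqrt_real (disc gam bet mu k))).
Definition lam_m (gam bet mu : R) (k : nat -> R) : C :=
  Cminus (RtoC (- (1/2) * mu * knorm k ^ 2))
         (Cmult (RtoC (1/2)) (Csqrt_real (disc gam bet mu k))).

(* block structure of the 7 indices: 0 | 1,2,3 | 4,5,6 *)
Definition blk (i : nat) : nat :=
  if Nat.eqb i 0 then 0%nat else if Nat.leb i 3 then 1%nat else 2%nat.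
Definition subi (i : nat) : nat :=
  if Nat.leb i 3 then (i - 1)%nat else (i - 4)%nat.

Section NMat.
Variables (gam bet mu t : R) (k : nat -> R).
Let lp := lam_p gam bet mu k.
Let lm := lam_m gam bet mu k.
Let ep := Cexp (Cmult lp (RtoC t)).
Let em := Cexp (Cmult lm (RtoC t)).
Let E1 : C := Cdiv (Cminus ep em) (Cminus lp lm).
Let Ea : C := Cdiv (Cminus (Cmult lp em) (Cmult lm ep)) (Cminus lp lm).
Let Eb : C := Cdiv (Cminus (Cmult lp ep) (Cmult lm em)) (Cminus lp lm).
Let dlt (a b : nat) : C := if Nat.eqb a b then RtoC 1 else RtoC 0.

Definition Nmat (i j : nat) : C :=
  match blk i, blk j with
  | 0%nat, 0%nat => Ea
  | 0%nat, 1%nat => Cmult (Cmult (Cmult (RtoC (- gam)) Ci) (RtoC (k (subi j)))) E1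
  | 1%nat, 0%nat => Cmult (Cmult (Cmult (RtoC (- gam)) Ci) (RtoC (k (subi i)))) E1
  | 1%nat, 1%nat => Cmult Eb (dlt (subi i) (subi j))
  | 1%nat, 2%nat => Cmult (Cmult (RtoC (- bet)) E1) (dlt (subi i) (subi j))
  | 2%nat, 1%nat => Cmult (Cmult (RtoC bet) E1) (dlt (subi i) (subi j))
  | 2%nat, 2%nat => Cmult Ea (dlt (subi i) (subi j))
  | _, _ => RtoC 0
  end.
End NMat.

(* Real 7x7 block pattern
     ( a00      a01 d3^T   0      )
     ( a10 d3   a11 I3     a12 I3 )
     ( 0        a21 I3     a22 I3 ) *)
Definition pat7 (a00 a01 a10 a11 a12 a21 a22 : R) (i j : nat) : R :=
  let d := if Nat.eqb (subi i) (subi j) then 1 else 0 in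
  match blk i, blk j with
  | 0%nat, 0%nat => a00
  | 0%nat, 1%nat => a01
  | 1%nat, 0%nat => a10
  | 1%nat, 1%nat => a11 * d
  | 1%nat, 2%nat => a12 * d
  | 2%nat, 1%nat => a21 * d
  | 2%nat, 2%nat => a22 * d
  | _, _ => 0
  end.

(* Main.v *)
Require Import Defs.
From Stdlib Require Import Reals Lra Lia Psatz.
From Stdlib Require Import Ratan.
From Coquelicot Require Import Coquelicot.
Open Scope R_scope.

Definition ep' (lp : C) (t : R) : C := Cexp (Cmult lp (RtoC t)).
Definition E1' (lp lm : C) t : C := Cdiv (Cminus (ep' lp t) (ep' lm t)) (Cminus lp lm).
Definition Ea' (lp lm : C) t : C :=
  Cdiv (Cminus (Cmult lp (ep' lm t)) (Cmult lm (ep' lp t))) (Cminus lp lm).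
Definition Eb' (lp lm : C) t : C :=
  Cdiv (Cminus (Cmult lp (ep' lp t)) (Cmult lm (ep' lm t))) (Cminus lp lm).

Lemma Ea_id lp lm t : lp <> lm -> Ea' lp lm t = Cminus (ep' lm t) (Cmult lm (E1' lp lm t)).
Proof. intro H. unfold Ea', E1'. field. now apply Cminus_eq_contra. Qed.
Lemma Eb_id lp lm t : lp <> lm -> Eb' lp lm t = Cplus (ep' lp t) (Cmult lm (E1' lp lm t)).
Proof. intro H. unfold Eb', E1'. field. now apply Cminus_eq_contra. Qed.

Lemma Cexp_pair x y t : Cexp (Cmult (x, y) (RtoC t)) = (exp (x*t) * cos (y*t), exp (x*t) * sin (y*t)).
Proof.
  unfold Cexp, Cmult, RtoC; simpl.
  replace (x * t - y * 0) with (x*t) by ring.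
  replace (x * 0 + y * t) with (y*t) by ring. reflexivity.
Qed.

Lemma Cmod_ep lp t : Cmod (ep' lp t) = exp (fst lp * t).
Proof.
  destruct lp as [x y]. unfold ep'. rewrite Cexp_pair. unfold Cmod; cbn [fst snd].
  replace ((exp (x * t) * cos (y * t)) ^ 2 + (exp (x * t) * sin (y * t)) ^ 2)
    with (exp (x*t) ^ 2) .
  - rewrite sqrt_pow2; auto. left; apply exp_pos.
  - replace ((exp (x * t) * cos (y * t)) ^ 2 + (exp (x * t) * sin (y * t)) ^ 2)
      with (exp (x*t) ^ 2 * ((sin (y*t))^2 + (cos (y*t))^2)) by ring.
    rewrite <- !Rsqr_pow2, sin2_cos2. ring.
Qed.

Lemma div_eq (x z w : C) : z <> 0%C -> Cmult w z = x -> Cdiv x z = w.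
Proof. intros Hz <-. field. exact Hz. Qed.

Lemma E_real a b t : a <> b ->
  E1' (RtoC a) (RtoC b) t = RtoC ((exp (a*t) - exp (b*t)) / (a - b)) /\
  Ea' (RtoC a) (RtoC b) t = RtoC ((a * exp (b*t) - b * exp (a*t)) / (a - b)) /\
  Eb' (RtoC a) (RtoC b) t = RtoC ((a * exp (a*t) - b * exp (b*t)) / (a - b)).
Proof.
  intro H.
  assert (Hep : forall x, ep' (RtoC x) t = RtoC (exp (x*t))).
  { intro x. unfold ep'. change (RtoC x) with (x, 0). rewrite Cexp_pair.
    rewrite Rmult_0_l, cos_0, sin_0. unfold RtoC. f_equal; ring. }
  assert (Hz : Cminus (RtoC a) (RtoC b) <> 0%C).
  { rewrite <- RtoC_minus. intro E. apply RtoC_inj in E. lra. }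
  unfold E1', Ea', Eb'; rewrite !Hep.
  repeat split; apply div_eq; auto;
  rewrite <- ?RtoC_minus, <- ?RtoC_mult, <- ?RtoC_minus; f_equal; field; lra.
Qed.

Lemma E1_cplx l v t : v <> 0 ->
  E1' (l, v) (l, - v) t = RtoC (exp (l*t) * sin (v*t) / v).
Proof.
  intro Hv. unfold E1'. apply div_eq.
  - intro E. apply (f_equal snd) in E. simpl in E. lra.
  - unfold ep'. rewrite !Cexp_pair.
    replace (- v * t) with (- (v*t)) by ring. rewrite cos_neg, sin_neg.
    apply injective_projections; simpl; field; auto.
Qed.

Lemma lam_real_eq gam bet mu k : 0 <= Defs.disc gam bet mu k ->
  lam_p gam bet mu k = RtoC (- (1/2) * mu * knorm k ^ 2 + sqrt (Defs.disc gam bet mu k) / 2) /\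
  lam_m gam bet mu k = RtoC (- (1/2) * mu * knorm k ^ 2 - sqrt (Defs.disc gam bet mu k) / 2).
Proof.
  intro H. unfold lam_p, lam_m, Csqrt_real.
  destruct (Rle_dec 0 (Defs.disc gam bet mu k)); [|lra].
  split; apply injective_projections; simpl; field.
Qed.

Lemma lam_cplx_eq gam bet mu k : Defs.disc gam bet mu k < 0 ->
  lam_p gam bet mu k = (- (1/2) * mu * knorm k ^ 2, sqrt (- Defs.disc gam bet mu k) / 2) /\
  lam_m gam bet mu k = (- (1/2) * mu * knorm k ^ 2, - (sqrt (- Defs.disc gam bet mu k) / 2)).
Proof.
  intro H. unfold lam_p, lam_m, Csqrt_real.
  destruct (Rle_dec 0 (Defs.disc gam bet mu k)); [lra|].
  split; apply injective_projections; simpl; field.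
Qed.

Lemma div_le x y z : 0 < y -> x <= z * y -> x / y <= z.
Proof.
  intros Hy H. replace z with (z * y * / y) by (field; lra).
  unfold Rdiv. apply Rmult_le_compat_r; [left; apply Rinv_0_lt_compat; lra| lra].
Qed.

Lemma exp_le_exp x y : x <= y -> exp x <= exp y.
Proof. intro H. destruct H as [H|H]; [left; apply exp_increasing; auto| subst; lra]. Qed.

Lemma EaEb_bound lp lm t M X : lp <> lm -> Cmod lm <= M -> Cmod (E1' lp lm t) <= X ->
  Cmod (Ea' lp lm t) <= exp (fst lm * t) + M * X /\
  Cmod (Eb' lp lm t) <= exp (fst lp * t) + M * X.
Proof.
  intros H HM HX.
  assert (HP : Cmod (Cmult lm (E1' lp lm t)) <= M * X).
  { rewrite Cmod_mult. apply Rmult_le_compat; auto using Cmod_ge_0. }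
  split.
  - rewrite Ea_id by auto. unfold Cminus. eapply Rle_trans; [apply Cmod_triangle|].
    rewrite Cmod_opp, Cmod_ep. lra.
  - rewrite Eb_id by auto. eapply Rle_trans; [apply Cmod_triangle|].
    rewrite Cmod_ep. lra.
Qed.

Lemma real_E1_le a b t : b < a -> 0 <= t ->
  Rabs ((exp (a*t) - exp (b*t)) / (a - b)) <= t * exp (a*t).
Proof.
  intros Hab Ht.
  assert (E : exp (b*t) = exp (a*t) * exp ((b-a)*t)).
  { rewrite <- exp_plus. f_equal. ring. }
  assert (H1 := exp_ineq1_le ((b-a)*t)).
  assert (H2 : exp ((b-a)*t) <= 1).
  { rewrite <- exp_0. apply exp_le_exp. nra. }
  assert (Hp := exp_pos (a*t)).
  rewrite Rabs_pos_eq.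
  - apply div_le; [lra|]. rewrite E. nra.
  - apply Rmult_le_pos; [|left; apply Rinv_0_lt_compat; lra]. rewrite E. nra.
Qed.

Lemma real_E1_le2 a b t : b < a ->
  Rabs ((exp (a*t) - exp (b*t)) / (a - b)) <= (exp (a*t) + exp (b*t)) / (a - b).
Proof.
  intros Hab. unfold Rdiv. rewrite Rabs_mult, Rabs_inv, (Rabs_pos_eq (a-b)) by lra.
  apply Rmult_le_compat_r; [left; apply Rinv_0_lt_compat; lra|].
  assert (Hp := exp_pos (a*t)). assert (Hq := exp_pos (b*t)).
  apply Rabs_le; lra.
Qed.

Lemma real_E2_le a b x y : b < a ->
  Rabs ((a * x - b * y) / (a - b)) <= (Rabs a * Rabs x + Rabs b * Rabs y) / (a - b).
Proof.
  intros Hab. unfold Rdiv. rewrite Rabs_mult, Rabs_inv, (Rabs_pos_eq (a-b)) by lra.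
  apply Rmult_le_compat_r; [left; apply Rinv_0_lt_compat; lra|].
  unfold Rminus. eapply Rle_trans; [apply Rabs_triang|].
  rewrite Rabs_Ropp, !Rabs_mult. lra.
Qed.

Lemma abs_sin_le x : 0 <= x -> Rabs (sin x) <= x.
Proof.
  intro Hx. destruct (Rle_lt_dec x 1).
  - rewrite Rabs_pos_eq.
    + destruct (Req_dec x 0) as [->|]; [rewrite sin_0; lra|]. left; apply sin_lt_x; lra.
    + apply sin_ge_0; [lra|]. assert (H := PI2_1). lra.
  - assert (H := SIN_bound x). apply Rabs_le; lra.
Qed.

Lemma cplx_E1 l v t : 0 < v -> 0 <= t ->
  Cmod (E1' (l, v) (l, - v) t) <= exp (l*t) / v /\
  Cmod (E1' (l, v) (l, - v) t) <= t * exp (l*t).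
Proof.
  intros Hv Ht. rewrite E1_cplx by lra. rewrite Cmod_R.
  assert (Hp := exp_pos (l*t)).
  assert (Hs := abs_sin_le (v*t) ltac:(nra)).
  assert (Hs2 := SIN_bound (v*t)).
  unfold Rdiv. rewrite !Rabs_mult, Rabs_inv, (Rabs_pos_eq v), (Rabs_pos_eq (exp _)) by lra.
  split.
  - apply Rmult_le_compat_r; [left; apply Rinv_0_lt_compat; lra|].
    assert (Rabs (sin (v*t)) <= 1) by (apply Rabs_le; lra). nra.
  - replace (t * exp (l*t)) with (exp (l*t) * (v*t) * / v) by (field; lra).
    apply Rmult_le_compat_r; [left; apply Rinv_0_lt_compat; lra|]. nra.
Qed.

Lemma knorm_facts k : 0 <= knorm k /\ knorm k ^ 2 = norm2 k /\
  forall m, (m < 3)%nat -> Rabs (k m) <= knorm k.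
Proof.
  assert (H0 : 0 <= norm2 k) by (unfold norm2; nra).
  assert (Hs : knorm k ^ 2 = norm2 k) by (unfold knorm; apply pow2_sqrt; auto).
  assert (Hp : 0 <= knorm k) by apply sqrt_pos.
  split; [auto| split; [auto|]].
  intros m Hm. apply Rabs_le.
  assert (Hkm : k m ^ 2 <= knorm k ^ 2).
  { rewrite Hs. unfold norm2.
    destruct m as [|[|[|m]]]; try lia; nra. }
  split; nra.
Qed.

Lemma disc_eq gam bet mu k : Defs.disc gam bet mu k =
  mu ^ 2 * knorm k ^ 4 - 4 * (gam ^ 2 * knorm k ^ 2 + bet ^ 2).
Proof. reflexivity. Qed.

Lemma Cmod_le_sq z M : 0 <= M -> Cmod z ^ 2 <= M ^ 2 -> Cmod z <= M.
Proof. intros HM H. assert (Hz := Cmod_ge_0 z). nra. Qed.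

Lemma small_region gam bet mu t k : 0 < gam -> 0 < bet -> 0 < mu -> 0 <= t ->
  knorm k <= 1 -> mu * knorm k <= bet ->
  Cmod (E1' (lam_p gam bet mu k) (lam_m gam bet mu k) t)
     <= (2 / bet) * exp (- (1/2) * mu * knorm k ^ 2 * t) /\
  Cmod (Ea' (lam_p gam bet mu k) (lam_m gam bet mu k) t)
     <= (1 + (gam + bet) * (2 / bet)) * exp (- (1/2) * mu * knorm k ^ 2 * t) /\
  Cmod (Eb' (lam_p gam bet mu k) (lam_m gam bet mu k) t)
     <= (1 + (gam + bet) * (2 / bet)) * exp (- (1/2) * mu * knorm k ^ 2 * t).
Proof.
  intros Hg Hb Hm Ht Hn1 Hnb.
  destruct (knorm_facts k) as [Hn0 _].
  remember (knorm k) as n eqn:En.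
  assert (HD : Defs.disc gam bet mu k <= - 3 * bet ^ 2).
  { rewrite disc_eq. rewrite <- En.
    assert (H0 : 0 <= mu * n) by (apply Rmult_le_pos; lra).
    assert (H1 : (mu * n) ^ 2 <= bet ^ 2) by nra.
    assert (H2 : n ^ 2 <= 1) by nra.
    assert (H3 : mu ^ 2 * n ^ 4 <= bet ^ 2).
    { replace (mu ^ 2 * n ^ 4) with ((mu*n)^2 * n^2) by ring.
      assert (0 <= (mu*n)^2) by nra. nra. }
    nra. }
  assert (Hb2 : 0 < bet ^ 2) by (apply pow_lt; lra).
  destruct (lam_cplx_eq gam bet mu k) as [Hp Hm']; [lra|].
  rewrite Hp, Hm'. rewrite <- En.
  set (D := Defs.disc gam bet mu k) in *.
  set (v := sqrt (- D) / 2).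
  set (l := - (1/2) * mu * n ^ 2).
  assert (Hv2 : v ^ 2 = - D / 4).
  { unfold v. replace ((sqrt (-D) / 2) ^ 2) with (sqrt (-D) ^ 2 / 4) by field.
    rewrite pow2_sqrt; lra. }
  assert (Hv0 : 0 < v) by (unfold v; assert (0 < sqrt (-D)) by (apply sqrt_lt_R0; lra); lra).
  assert (Hvb : bet / 2 <= v) by nra.
  destruct (cplx_E1 l v t Hv0 Ht) as [HE1 _].
  assert (Hex := exp_pos (l * t)).
  assert (HE1' : Cmod (E1' (l, v) (l, - v) t) <= 2 / bet * exp (l * t)).
  { eapply Rle_trans; [exact HE1|]. unfold Rdiv.
    rewrite (Rmult_comm (exp _)). apply Rmult_le_compat_r; [lra|].
    apply Rmult_le_reg_r with (v * bet); [nra|].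
    replace (/ v * (v * bet)) with bet by (field; lra).
    replace (2 * / bet * (v * bet)) with (2 * v) by (field; lra). lra. }
  assert (HM : Cmod (l, - v) <= gam + bet).
  { apply Cmod_le_sq; [lra|]. rewrite Cmod2_alt. unfold Re, Im; cbn [fst snd].
    replace ((- v) ^ 2) with (v ^ 2) by ring. rewrite Hv2. unfold D, l.
    rewrite disc_eq. rewrite <- En.
    replace ((- (1/2) * mu * n ^ 2) ^ 2 + - (mu ^ 2 * n ^ 4 - 4 * (gam ^ 2 * n ^ 2 + bet ^ 2)) / 4)
      with (gam ^ 2 * n ^ 2 + bet ^ 2) by field.
    assert (n ^ 2 <= 1) by nra.
    assert (gam ^ 2 * n ^ 2 <= gam ^ 2 * 1) by (apply Rmult_le_compat_l; nra).
    nra. }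
  assert (Hne : (l, v) <> (l, - v)).
  { intro E. apply (f_equal snd) in E. simpl in E. lra. }
  destruct (EaEb_bound _ _ t _ _ Hne HM HE1') as [HA HB].
  cbn [fst] in HA, HB. unfold l in *.
  split; [exact HE1'|]. split; lra.
Qed.

Lemma real_alg gam bet mu n s : 0 < gam -> 0 < bet -> 0 < mu -> 0 < n -> 0 <= s ->
  s ^ 2 = mu ^ 2 * n ^ 4 - 4 * (gam ^ 2 * n ^ 2 + bet ^ 2) ->
  - (1/2) * mu * n ^ 2 + s / 2 < 0 /\
  - (1/2) * mu * n ^ 2 + s / 2 <= - (gam ^ 2 / mu) /\
  mu * n ^ 2 / 2 <= - (- (1/2) * mu * n ^ 2 - s / 2) /\
  - (- (1/2) * mu * n ^ 2 - s / 2) <= mu * n ^ 2 /\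
  (- (- (1/2) * mu * n ^ 2 + s / 2)) * (- (- (1/2) * mu * n ^ 2 - s / 2)) = gam ^ 2 * n ^ 2 + bet ^ 2.
Proof.
  intros Hg Hb Hm Hn Hs Hs2.
  set (m2 := mu * n ^ 2).
  assert (Hm2 : 0 < m2) by (unfold m2; apply Rmult_lt_0_compat; [lra| apply pow_lt; lra]).
  assert (Hq : 0 < gam ^ 2 * n ^ 2 + bet ^ 2).
  { assert (0 < bet ^ 2) by (apply pow_lt; lra).
    assert (0 <= gam ^ 2 * n ^ 2) by (apply Rmult_le_pos; apply pow_le; lra). lra. }
  assert (Hsm : s < m2).
  { destruct (Rlt_le_dec s m2) as [|H]; auto.
    assert (m2 * m2 <= s * s) by (apply Rmult_le_compat; lra).
    assert (E : m2 ^ 2 = mu ^ 2 * n ^ 4) by (unfold m2; ring). nra. }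
  assert (Hprod : (- (- (1/2) * mu * n ^ 2 + s / 2)) * (- (- (1/2) * mu * n ^ 2 - s / 2))
                  = gam ^ 2 * n ^ 2 + bet ^ 2).
  { replace ((- (- (1/2) * mu * n ^ 2 + s / 2)) * (- (- (1/2) * mu * n ^ 2 - s / 2)))
      with ((mu ^ 2 * n ^ 4 - s ^ 2) / 4) by field. rewrite Hs2. field. }
  fold m2 in Hprod |- *.
  replace (- (1/2) * mu * n ^ 2) with (- (1/2) * m2) in * by (unfold m2; ring).
  assert (Ha : - (1/2) * m2 + s / 2 < 0) by lra.
  split; [exact Ha|]. split.
  - assert (H1 : gam ^ 2 * n ^ 2 <= (- (- (1/2) * m2 + s / 2)) * m2).
    { assert (gam ^ 2 * n ^ 2 <= gam ^ 2 * n ^ 2 + bet ^ 2) by (assert (0 < bet^2) by (apply pow_lt; lra); lra).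
      rewrite <- Hprod in H.
      assert ((- (- (1/2) * m2 + s / 2)) * (- (- (1/2) * m2 - s / 2)) <= (- (- (1/2) * m2 + s / 2)) * m2)
        by (apply Rmult_le_compat_l; lra). lra. }
    unfold m2 in H1.
    assert (H2 : gam ^ 2 <= (- (- (1/2) * m2 + s / 2)) * mu).
    { apply Rmult_le_reg_r with (n ^ 2); [apply pow_lt; lra|]. unfold m2. lra. }
    assert (H3 : gam ^ 2 / mu <= - (- (1/2) * m2 + s / 2)).
    { apply div_le; lra. }
    lra.
  - split; [lra|]. split; [lra|]. exact Hprod.
Qed.

Lemma mid_region gam bet mu t k eps L : 0 < gam -> 0 < bet -> 0 < mu -> 0 <= t ->
  0 < eps -> eps <= knorm k <= L ->
  lam_p gam bet mu k <> lam_m gam bet mu k ->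
  Cmod (E1' (lam_p gam bet mu k) (lam_m gam bet mu k) t)
     <= t * exp (- Rmin (mu * eps ^ 2 / 2) (gam ^ 2 / mu) * t) /\
  Cmod (Ea' (lam_p gam bet mu k) (lam_m gam bet mu k) t)
     <= exp (- Rmin (mu * eps ^ 2 / 2) (gam ^ 2 / mu) * t)
        + (gam * L + bet + mu * L ^ 2) * (t * exp (- Rmin (mu * eps ^ 2 / 2) (gam ^ 2 / mu) * t)) /\
  Cmod (Eb' (lam_p gam bet mu k) (lam_m gam bet mu k) t)
     <= exp (- Rmin (mu * eps ^ 2 / 2) (gam ^ 2 / mu) * t)
        + (gam * L + bet + mu * L ^ 2) * (t * exp (- Rmin (mu * eps ^ 2 / 2) (gam ^ 2 / mu) * t)).
Proof.
  intros Hg Hb Hm Ht He [HnE HnL] Hne.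
  set (a := Rmin (mu * eps ^ 2 / 2) (gam ^ 2 / mu)).
  assert (Ha1 : a <= mu * eps ^ 2 / 2) by apply Rmin_l.
  assert (Ha2 : a <= gam ^ 2 / mu) by apply Rmin_r.
  set (M := gam * L + bet + mu * L ^ 2).
  destruct (knorm_facts k) as [Hn0 _].
  remember (knorm k) as n eqn:En.
  assert (Hn : 0 < n) by lra.
  assert (Hn2 : eps ^ 2 <= n ^ 2) by (apply pow_incr; lra).
  assert (HnL2 : n ^ 2 <= L ^ 2) by (apply pow_incr; lra).
  assert (HL : 0 < L) by lra.
  assert (HM0 : 0 <= M).
  { unfold M. assert (0 <= mu * L ^ 2) by (apply Rmult_le_pos; [lra| apply pow_le; lra]).
    assert (0 <= gam * L) by (apply Rmult_le_pos; lra). lra. }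
  assert (Hexp : forall x, x <= - a -> exp (x * t) <= exp (- a * t)).
  { intros x Hx. apply exp_le_exp. apply Rmult_le_compat_r; lra. }
  destruct (Rle_lt_dec 0 (Defs.disc gam bet mu k)) as [HD|HD].
  -
    destruct (lam_real_eq gam bet mu k HD) as [Hp Hm'].
    rewrite Hp, Hm' in *. rewrite <- En in *.
    set (s := sqrt (Defs.disc gam bet mu k)) in *.
    assert (Hs0 : 0 <= s) by apply sqrt_pos.
    assert (Hs2 : s ^ 2 = mu ^ 2 * n ^ 4 - 4 * (gam ^ 2 * n ^ 2 + bet ^ 2)).
    { unfold s. rewrite pow2_sqrt by lra. rewrite disc_eq, <- En. reflexivity. }
    destruct (real_alg gam bet mu n s Hg Hb Hm Hn Hs0 Hs2) as [Hap [Hag [Hb1 [Hb2 _]]]].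
    assert (Hsp : 0 < s).
    { destruct Hs0 as [|Hs0]; auto. exfalso. apply Hne. rewrite <- Hs0. apply (f_equal RtoC). lra. }
    set (ap := - (1/2) * mu * n ^ 2 + s / 2) in *.
    set (bm := - (1/2) * mu * n ^ 2 - s / 2) in *.
    assert (Hab : bm < ap) by (unfold ap, bm; lra).
    assert (Hneq : ap <> bm) by lra.
    destruct (E_real ap bm t Hneq) as [HE1 _].
    assert (HX : Cmod (E1' (RtoC ap) (RtoC bm) t) <= t * exp (- a * t)).
    { rewrite HE1, Cmod_R. eapply Rle_trans; [apply real_E1_le; lra|].
      apply Rmult_le_compat_l; [lra|]. apply Hexp. lra. }
    assert (HMl : Cmod (RtoC bm) <= M).
    { rewrite Cmod_R. rewrite Rabs_left by lra.
      assert (mu * n ^ 2 <= mu * L ^ 2) by (apply Rmult_le_compat_l; lra).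
      assert (0 <= gam * L) by (apply Rmult_le_pos; lra). unfold M; lra. }
    assert (Hne' : RtoC ap <> RtoC bm) by (intro E; apply RtoC_inj in E; lra).
    destruct (EaEb_bound _ _ t _ _ Hne' HMl HX) as [HA HB].
    cbn [fst RtoC] in HA, HB.
    assert (exp (bm * t) <= exp (- a * t)) by (apply Hexp; lra).
    assert (exp (ap * t) <= exp (- a * t)) by (apply Hexp; lra).
    split; [exact HX|]. split; lra.
  -
    destruct (lam_cplx_eq gam bet mu k HD) as [Hp Hm'].
    rewrite Hp, Hm' in *. rewrite <- En in *.
    set (D := Defs.disc gam bet mu k) in *.
    set (v := sqrt (- D) / 2).
    set (l := - (1/2) * mu * n ^ 2).
    assert (Hv2 : v ^ 2 = - D / 4).
    { unfold v. replace ((sqrt (-D) / 2) ^ 2) with (sqrt (-D) ^ 2 / 4) by field.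
      rewrite pow2_sqrt; lra. }
    assert (Hv0 : 0 < v) by (unfold v; assert (0 < sqrt (-D)) by (apply sqrt_lt_R0; lra); lra).
    destruct (cplx_E1 l v t Hv0 Ht) as [_ HE1].
    assert (Hl : l <= - a).
    { unfold l. assert (mu * eps ^ 2 <= mu * n ^ 2) by (apply Rmult_le_compat_l; lra). lra. }
    assert (HX : Cmod (E1' (l, v) (l, - v) t) <= t * exp (- a * t)).
    { eapply Rle_trans; [exact HE1|]. apply Rmult_le_compat_l; [lra|]. apply Hexp; lra. }
    assert (HMl : Cmod (l, - v) <= M).
    { apply Cmod_le_sq; [lra|]. rewrite Cmod2_alt. unfold Re, Im; cbn [fst snd].
      replace ((- v) ^ 2) with (v ^ 2) by ring. rewrite Hv2. unfold D, l.
      rewrite disc_eq. rewrite <- En.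
      replace ((- (1/2) * mu * n ^ 2) ^ 2 + - (mu ^ 2 * n ^ 4 - 4 * (gam ^ 2 * n ^ 2 + bet ^ 2)) / 4)
        with (gam ^ 2 * n ^ 2 + bet ^ 2) by field.
      assert (gam ^ 2 * n ^ 2 <= gam ^ 2 * L ^ 2) by (apply Rmult_le_compat_l; [apply pow_le|]; lra).
      assert (0 <= mu * L ^ 2) by (apply Rmult_le_pos; [lra| apply pow_le; lra]).
      assert (0 <= gam * L) by (apply Rmult_le_pos; lra).
      assert ((gam * L + bet) ^ 2 <= M ^ 2).
      { unfold M. apply pow_incr. lra. }
      assert (gam ^ 2 * L ^ 2 + bet ^ 2 <= (gam * L + bet) ^ 2).
      { assert (0 <= gam * L * bet) by (apply Rmult_le_pos; lra). nra. }
      lra. }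
    assert (Hne' : (l, v) <> (l, - v)).
    { intro E. apply (f_equal snd) in E. simpl in E. lra. }
    destruct (EaEb_bound _ _ t _ _ Hne' HMl HX) as [HA HB].
    cbn [fst] in HA, HB.
    assert (exp (l * t) <= exp (- a * t)) by (apply Hexp; lra).
    split; [exact HX|]. split; lra.
Qed.

Lemma frac_helper A P Q s m2 : 0 < m2 -> m2 / 2 <= s -> 0 <= A -> 0 <= P -> 0 <= Q ->
  (A * P + m2 * Q) / s <= (2 * A / m2) * P + 2 * Q.
Proof.
  intros Hm Hs HA HP HQ. apply div_le; [lra|].
  assert (H0 : 0 <= 2 * A / m2 * P + 2 * Q).
  { assert (0 <= 2 * A / m2) by (unfold Rdiv; apply Rmult_le_pos; [lra| left; apply Rinv_0_lt_compat; lra]).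
    assert (0 <= 2 * A / m2 * P) by (apply Rmult_le_pos; lra). lra. }
  assert (E : (2 * A / m2 * P + 2 * Q) * (m2 / 2) = A * P + m2 * Q) by (field; lra).
  assert ((2 * A / m2 * P + 2 * Q) * (m2 / 2) <= (2 * A / m2 * P + 2 * Q) * s)
    by (apply Rmult_le_compat_l; lra).
  lra.
Qed.

Lemma large_region gam bet mu t k c : 0 < gam -> 0 < bet -> 0 < mu -> 0 <= t ->
  1 <= knorm k -> 3 * (gam + bet) / mu <= knorm k ->
  0 < c -> c <= gam ^ 2 / mu -> c <= mu / 2 ->
  Cmod (E1' (lam_p gam bet mu k) (lam_m gam bet mu k) t)
     <= (2 / mu) * / knorm k ^ 2 * (exp (- c * t) + exp (- c * knorm k ^ 2 * t)) /\
  Cmod (Ea' (lam_p gam bet mu k) (lam_m gam bet mu k) t)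
     <= (4 * (gam ^ 2 + bet ^ 2) / mu ^ 2) * / knorm k ^ 2 * exp (- c * knorm k ^ 2 * t)
        + 2 * exp (- c * t) /\
  Cmod (Eb' (lam_p gam bet mu k) (lam_m gam bet mu k) t)
     <= (4 * (gam ^ 2 + bet ^ 2) / mu ^ 2) * / knorm k ^ 2 * exp (- c * t)
        + 2 * exp (- c * knorm k ^ 2 * t).
Proof.
  intros Hg Hb Hm Ht Hn1 Hn3 Hc Hc1 Hc2.
  destruct (knorm_facts k) as [Hn0 _].
  remember (knorm k) as n eqn:En.
  assert (Hn : 0 < n) by lra.
  assert (Hn2p : 0 < n ^ 2) by (apply pow_lt; lra).
  assert (Hn2 : 1 <= n ^ 2) by nra.
  assert (Hmn : 3 * (gam + bet) <= mu * n).
  { apply Rmult_le_reg_r with (/ mu); [apply Rinv_0_lt_compat; lra|].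
    replace (mu * n * / mu) with n by (field; lra). exact Hn3. }
  assert (Hg2 : 0 < gam ^ 2) by (apply pow_lt; lra).
  assert (Hb2 : 0 < bet ^ 2) by (apply pow_lt; lra).
  assert (HGB : 9 * (gam ^ 2 + bet ^ 2) <= (mu * n) ^ 2).
  { assert (0 <= gam * bet) by (apply Rmult_le_pos; lra).
    assert ((3 * (gam + bet)) ^ 2 <= (mu * n) ^ 2) by (apply pow_incr; lra). nra. }
  assert (HDq : mu ^ 2 * n ^ 4 / 4 <= mu ^ 2 * n ^ 4 - 4 * (gam ^ 2 * n ^ 2 + bet ^ 2)).
  { assert (E1 : mu ^ 2 * n ^ 4 = (mu * n) ^ 2 * n ^ 2) by ring.
    assert (9 * (gam ^ 2 + bet ^ 2) * n ^ 2 <= (mu * n) ^ 2 * n ^ 2)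
      by (apply Rmult_le_compat_r; lra).
    assert (bet ^ 2 <= bet ^ 2 * n ^ 2) by (assert (bet^2 * 1 <= bet^2 * n^2) by (apply Rmult_le_compat_l; lra); lra).
    nra. }
  assert (HD : 0 <= Defs.disc gam bet mu k).
  { rewrite disc_eq, <- En. assert (0 <= mu ^ 2 * n ^ 4) by (apply Rmult_le_pos; apply pow_le; lra). lra. }
  destruct (lam_real_eq gam bet mu k HD) as [Hp Hm'].
  rewrite Hp, Hm'. rewrite <- En.
  set (s := sqrt (Defs.disc gam bet mu k)) in *.
  assert (Hs0 : 0 <= s) by apply sqrt_pos.
  assert (Hs2 : s ^ 2 = mu ^ 2 * n ^ 4 - 4 * (gam ^ 2 * n ^ 2 + bet ^ 2)).
  { unfold s. rewrite pow2_sqrt by lra. rewrite disc_eq, <- En. reflexivity. }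
  set (m2 := mu * n ^ 2).
  assert (Hm2 : 0 < m2) by (unfold m2; apply Rmult_lt_0_compat; lra).
  assert (Hsm : m2 / 2 <= s).
  { destruct (Rle_lt_dec (m2 / 2) s) as [|H]; auto.
    assert (s * s < m2 / 2 * (m2 / 2)).
    { destruct Hs0 as [Hs0|Hs0].
      - apply Rmult_le_0_lt_compat; lra.
      - rewrite <- Hs0. nra. }
    assert (E : (m2 / 2) * (m2 / 2) = mu ^ 2 * n ^ 4 / 4) by (unfold m2; field).
    nra. }
  destruct (real_alg gam bet mu n s Hg Hb Hm Hn Hs0 Hs2) as [Hap [Hag [Hb1 [Hb2' Hprod]]]].
  set (ap := - (1/2) * mu * n ^ 2 + s / 2) in *.
  set (bm := - (1/2) * mu * n ^ 2 - s / 2) in *.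
  assert (Hab : bm < ap) by (unfold ap, bm; lra).
  assert (Hneq : ap <> bm) by lra.
  assert (Hs_ab : ap - bm = s) by (unfold ap, bm; lra).
  destruct (E_real ap bm t Hneq) as [HE1 [HEa HEb]].
  rewrite HE1, HEa, HEb, !Cmod_R.
  set (X := exp (- c * t)). set (Y := exp (- c * n ^ 2 * t)).
  assert (HX0 : 0 < X) by apply exp_pos. assert (HY0 : 0 < Y) by apply exp_pos.
  assert (HXa : exp (ap * t) <= X).
  { apply exp_le_exp. apply Rmult_le_compat_r; lra. }
  assert (HYb : exp (bm * t) <= Y).
  { apply exp_le_exp.
    assert (c * n ^ 2 <= mu / 2 * n ^ 2) by (apply Rmult_le_compat_r; lra).
    replace (- c * n ^ 2 * t) with ((- (c * n ^ 2)) * t) by ring.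
    apply Rmult_le_compat_r; [lra|]. unfold bm. lra. }
  assert (Hea := exp_pos (ap * t)). assert (Heb := exp_pos (bm * t)).
  set (K := 2 * (gam ^ 2 + bet ^ 2) / mu).
  assert (HK : - ap <= K).
  { assert (H1 : gam ^ 2 * n ^ 2 + bet ^ 2 <= (gam ^ 2 + bet ^ 2) * n ^ 2).
    { assert (bet ^ 2 * 1 <= bet ^ 2 * n ^ 2) by (apply Rmult_le_compat_l; lra). lra. }
    assert (H2 : (- ap) * (m2 / 2) <= (- ap) * (- bm)) by (apply Rmult_le_compat_l; unfold m2 in *; lra).
    assert (H3 : (- ap) * (m2 / 2) <= (gam ^ 2 + bet ^ 2) * n ^ 2) by lra.
    unfold K. apply Rmult_le_reg_r with (mu * n ^ 2 / 2); [lra|].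
    replace (2 * (gam ^ 2 + bet ^ 2) / mu * (mu * n ^ 2 / 2)) with ((gam ^ 2 + bet ^ 2) * n ^ 2)
      by (field; lra).
    unfold m2 in H3. lra. }
  assert (Hcoef : 2 * K / m2 = 4 * (gam ^ 2 + bet ^ 2) / mu ^ 2 * / n ^ 2)
    by (unfold K, m2; field; split; lra).
  assert (HK0 : 0 <= K) by lra.
  split; [|split].
  - eapply Rle_trans; [apply real_E1_le2; lra|]. rewrite Hs_ab.
    eapply Rle_trans with ((1 * (exp (ap * t) + exp (bm * t)) + m2 * 0) / s).
    { right. f_equal. ring. }
    eapply Rle_trans; [apply frac_helper; lra|].
    replace (2 * 1 / m2 * (exp (ap * t) + exp (bm * t)) + 2 * 0)
      with (2 / mu * / n ^ 2 * (exp (ap * t) + exp (bm * t))) by (unfold m2; field; lra).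
    apply Rmult_le_compat_l; [|lra].
    apply Rmult_le_pos; [unfold Rdiv; apply Rmult_le_pos; [lra| left; apply Rinv_0_lt_compat; lra]|].
    left; apply Rinv_0_lt_compat; lra.
  - eapply Rle_trans; [apply real_E2_le; lra|]. rewrite Hs_ab.
    rewrite (Rabs_left ap) by lra. rewrite (Rabs_left bm) by lra.
    rewrite !Rabs_pos_eq by lra.
    eapply Rle_trans with ((K * Y + m2 * X) / s).
    { apply Rmult_le_compat_r; [left; apply Rinv_0_lt_compat; lra|].
      assert (- ap * exp (bm * t) <= K * Y) by (apply Rmult_le_compat; lra).
      assert (- bm * exp (ap * t) <= m2 * X) by (apply Rmult_le_compat; unfold m2 in *; lra).
      lra. }
    eapply Rle_trans; [apply frac_helper; lra|]. rewrite Hcoef. lra.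
  - eapply Rle_trans; [apply real_E2_le; lra|]. rewrite Hs_ab.
    rewrite (Rabs_left ap) by lra. rewrite (Rabs_left bm) by lra.
    rewrite !Rabs_pos_eq by lra.
    eapply Rle_trans with ((K * X + m2 * Y) / s).
    { apply Rmult_le_compat_r; [left; apply Rinv_0_lt_compat; lra|].
      assert (- ap * exp (ap * t) <= K * X) by (apply Rmult_le_compat; lra).
      assert (- bm * exp (bm * t) <= m2 * Y) by (apply Rmult_le_compat; unfold m2 in *; lra).
      lra. }
    eapply Rle_trans; [apply frac_helper; lra|]. rewrite Hcoef. lra.
Qed.

Definition Nm' (Ea Eb E1 : C) (gam bet : R) (k : nat -> R) (i j : nat) : C :=
  let dlt := fun a b : nat => if Nat.eqb a b then RtoC 1 else RtoC 0 in
  match blk i, blk j with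
  | 0%nat, 0%nat => Ea
  | 0%nat, 1%nat => Cmult (Cmult (Cmult (RtoC (- gam)) Ci) (RtoC (k (subi j)))) E1
  | 1%nat, 0%nat => Cmult (Cmult (Cmult (RtoC (- gam)) Ci) (RtoC (k (subi i)))) E1
  | 1%nat, 1%nat => Cmult Eb (dlt (subi i) (subi j))
  | 1%nat, 2%nat => Cmult (Cmult (RtoC (- bet)) E1) (dlt (subi i) (subi j))
  | 2%nat, 1%nat => Cmult (Cmult (RtoC bet) E1) (dlt (subi i) (subi j))
  | 2%nat, 2%nat => Cmult Ea (dlt (subi i) (subi j))
  | _, _ => RtoC 0
  end.

Lemma Nmat_unfold gam bet mu t k i j :
  Nmat gam bet mu t k i j =
  Nm' (Ea' (lam_p gam bet mu k) (lam_m gam bet mu k) t)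
      (Eb' (lam_p gam bet mu k) (lam_m gam bet mu k) t)
      (E1' (lam_p gam bet mu k) (lam_m gam bet mu k) t) gam bet k i j.
Proof. reflexivity. Qed.

Lemma Nm_pat Ea Eb E1 gam bet k r00 r01 r10 r11 r12 r21 r22 :
  0 < gam -> 0 < bet ->
  Cmod Ea <= r00 ->
  (forall m, (m < 3)%nat -> gam * Rabs (k m) * Cmod E1 <= r01) ->
  (forall m, (m < 3)%nat -> gam * Rabs (k m) * Cmod E1 <= r10) ->
  Cmod Eb <= r11 -> bet * Cmod E1 <= r12 -> bet * Cmod E1 <= r21 -> Cmod Ea <= r22 ->
  forall i j, (i < 7)%nat -> (j < 7)%nat ->
  Cmod (Nm' Ea Eb E1 gam bet k i j) <= pat7 r00 r01 r10 r11 r12 r21 r22 i j.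
Proof.
  intros Hg Hb H00 H01 H10 H11 H12 H21 H22 i j Hi Hj.
  assert (A0 := H01 0%nat ltac:(lia)). assert (A1 := H01 1%nat ltac:(lia)).
  assert (A2 := H01 2%nat ltac:(lia)).
  assert (B0 := H10 0%nat ltac:(lia)). assert (B1 := H10 1%nat ltac:(lia)).
  assert (B2 := H10 2%nat ltac:(lia)).
  assert (Z : Cmod (RtoC 0) = 0) by (rewrite Cmod_R; apply Rabs_R0).
  destruct i as [|[|[|[|[|[|[|i]]]]]]]; try lia;
  destruct j as [|[|[|[|[|[|[|j]]]]]]]; try lia;
  cbn [Nm' pat7 blk subi Nat.eqb Nat.leb Nat.sub];
  rewrite ?Cmod_mult, ?Cmod_R, ?Cmod_Ci, ?Rabs_R1, ?Rabs_R0, ?Rabs_Ropp,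
    ?(Rabs_pos_eq gam), ?(Rabs_pos_eq bet) by lra; lra.
Qed.

Lemma pat7_scale C0 e p00 p01 p10 p11 p12 p21 p22 i j :
  C0 * pat7 p00 p01 p10 p11 p12 p21 p22 i j * e =
  pat7 (C0 * p00 * e) (C0 * p01 * e) (C0 * p10 * e) (C0 * p11 * e) (C0 * p12 * e)
       (C0 * p21 * e) (C0 * p22 * e) i j.
Proof.
  unfold pat7. destruct (Nat.eqb (subi i) (subi j));
  destruct (blk i) as [|[|[|]]]; destruct (blk j) as [|[|[|]]]; ring.
Qed.

Lemma pat7_lin C0 X Y p00 p01 p10 p11 p12 p21 p22 q00 q01 q10 q11 q12 q21 q22 i j :
  C0 * (pat7 p00 p01 p10 p11 p12 p21 p22 i j * X + pat7 q00 q01 q10 q11 q12 q21 q22 i j * Y) =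
  pat7 (C0 * (p00 * X + q00 * Y)) (C0 * (p01 * X + q01 * Y)) (C0 * (p10 * X + q10 * Y))
       (C0 * (p11 * X + q11 * Y)) (C0 * (p12 * X + q12 * Y)) (C0 * (p21 * X + q21 * Y))
       (C0 * (p22 * X + q22 * Y)) i j.
Proof.
  unfold pat7. destruct (Nat.eqb (subi i) (subi j));
  destruct (blk i) as [|[|[|]]]; destruct (blk j) as [|[|[|]]]; ring.
Qed.

Lemma bound_k g x y X B e C0 : 0 <= g -> 0 <= x <= X -> y <= B * e -> 0 <= y -> 0 <= e ->
  g * B <= C0 -> g * x * y <= C0 * X * e.
Proof.
  intros Hg [Hx HX] Hy Hy0 He HC.
  assert (H1 : g * x * y <= g * X * (B * e)).
  { apply Rmult_le_compat; try lra.
    - apply Rmult_le_pos; lra.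
    - apply Rmult_le_compat_l; lra. }
  assert (H2 : g * X * (B * e) = (g * B) * (X * e)) by ring.
  assert (H3 : (g * B) * (X * e) <= C0 * (X * e)).
  { apply Rmult_le_compat_r; [apply Rmult_le_pos; lra| lra]. }
  lra.
Qed.

Lemma te_bound a t : 0 < a -> 0 <= t -> t * exp (- a * t) <= (2 / a) * exp (- (a / 2) * t).
Proof.
  intros Ha Ht.
  assert (E : exp (- a * t) = exp (- (a/2) * t) * exp (- (a/2) * t)).
  { rewrite <- exp_plus. f_equal. field. }
  assert (H1 : t * exp (- (a/2) * t) <= 2 / a).
  { assert (H := exp_ineq1_le ((a/2) * t)).
    assert (E2 : exp ((a/2) * t) * exp (- (a/2) * t) = 1).
    { rewrite <- exp_plus. replace (a / 2 * t + - (a / 2) * t) with 0 by ring. apply exp_0. }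
    assert (Hp := exp_pos (- (a/2) * t)).
    assert (t <= 2 / a * exp ((a/2) * t)).
    { apply Rmult_le_reg_l with (a / 2); [lra|].
      replace (a / 2 * (2 / a * exp (a / 2 * t))) with (exp (a/2 * t)) by (field; lra). lra. }
    assert (HH : t * exp (- (a/2) * t) <= 2 / a * exp ((a/2) * t) * exp (- (a/2) * t))
      by (apply Rmult_le_compat_r; lra).
    rewrite Rmult_assoc, E2, Rmult_1_r in HH. exact HH. }
  rewrite E, <- Rmult_assoc. apply Rmult_le_compat_r; [left; apply exp_pos| exact H1].
Qed.

Lemma le_scale2 g y B e C0 : 0 <= g -> y <= B * e -> 0 <= e -> g * B <= C0 -> g * y <= C0 * 1 * e.
Proof.
  intros Hg Hy He HC.
  assert (g * y <= g * (B * e)) by (apply Rmult_le_compat_l; lra).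
  assert ((g * B) * e <= C0 * e) by (apply Rmult_le_compat_r; lra). lra.
Qed.

Lemma le_scale1 y B e C0 : y <= B * e -> 0 <= e -> B <= C0 -> y <= C0 * 1 * e.
Proof. intros Hy He HC. assert (B * e <= C0 * e) by (apply Rmult_le_compat_r; lra). lra. Qed.

Theorem proposition5p1 (gam bet mu : R) :
  0 < gam -> 0 < bet -> 0 < mu ->
  exists eps L : R, 0 < eps < L /\
  exists C0 c : R, 0 < C0 /\ 0 < c /\
  forall (t : R) (k : nat -> R), 0 <= t ->
    lam_p gam bet mu k <> lam_m gam bet mu k ->
    forall i j : nat, (i < 7)%nat -> (j < 7)%nat ->
      (knorm k <= eps ->
         Cmod (Nmat gam bet mu t k i j) <=
         C0 * pat7 1 (knorm k) (knorm k) 1 1 1 1 i j * exp (- (1/2) * mu * knorm k ^ 2 * t)) /\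
      (eps <= knorm k <= L ->
         Cmod (Nmat gam bet mu t k i j) <=
         C0 * pat7 1 1 1 1 1 1 1 i j * exp (- c * t)) /\
      (L <= knorm k ->
         Cmod (Nmat gam bet mu t k i j) <=
         C0 * (pat7 1 (/ knorm k) (/ knorm k) (/ knorm k ^ 2) (/ knorm k ^ 2) (/ knorm k ^ 2) 1 i j
                 * exp (- c * t)
               + pat7 (/ knorm k ^ 2) (/ knorm k) (/ knorm k) 1 (/ knorm k ^ 2) (/ knorm k ^ 2) (/ knorm k ^ 2) i j
                 * exp (- c * knorm k ^ 2 * t))).
Proof.
  intros Hg Hb Hm.
  set (eps := Rmin 1 (bet / mu)).
  assert (Hbm : 0 < bet / mu) by (apply Rdiv_lt_0_compat; lra).
  assert (He1 : eps <= 1) by apply Rmin_l.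
  assert (He2 : eps <= bet / mu) by apply Rmin_r.
  assert (He0 : 0 < eps) by (unfold eps; apply Rmin_glb_lt; lra).
  assert (Hgbm : 0 < 3 * (gam + bet) / mu) by (apply Rdiv_lt_0_compat; lra).
  set (L := 1 + 3 * (gam + bet) / mu).
  exists eps, L. split; [unfold L; lra|].
  set (a := Rmin (mu * eps ^ 2 / 2) (gam ^ 2 / mu)).
  assert (Ha0 : 0 < a).
  { unfold a; apply Rmin_glb_lt.
    - assert (0 < eps ^ 2) by (apply pow_lt; lra). assert (0 < mu * eps ^ 2) by (apply Rmult_lt_0_compat; lra). lra.
    - apply Rdiv_lt_0_compat; [apply pow_lt|]; lra. }
  assert (Ha2 : a <= gam ^ 2 / mu) by apply Rmin_r.
  set (c := Rmin (a / 2) (mu / 2)).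
  assert (Hc1 : c <= a / 2) by apply Rmin_l.
  assert (Hc2 : c <= mu / 2) by apply Rmin_r.
  assert (Hc0 : 0 < c) by (unfold c; apply Rmin_glb_lt; lra).
  set (M := gam * L + bet + mu * L ^ 2).
  assert (HL1 : 1 <= L) by (unfold L; lra).
  assert (HM0 : 0 <= M).
  { unfold M. assert (0 <= mu * L ^ 2) by (apply Rmult_le_pos; [lra| apply pow_le; lra]).
    assert (0 <= gam * L) by (apply Rmult_le_pos; lra). lra. }
  set (K1 := 1 + (gam + bet) * (2 / bet)).
  set (K2 := 4 * (gam ^ 2 + bet ^ 2) / mu ^ 2).
  assert (P2b : 0 < 2 / bet) by (apply Rdiv_lt_0_compat; lra).
  assert (P2a : 0 < 2 / a) by (apply Rdiv_lt_0_compat; lra).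
  assert (P2m : 0 < 2 / mu) by (apply Rdiv_lt_0_compat; lra).
  assert (PK1 : 0 < K1) by (unfold K1; assert (0 < (gam + bet) * (2 / bet)) by (apply Rmult_lt_0_compat; lra); lra).
  assert (PK2 : 0 <= K2).
  { unfold K2. apply Rmult_le_pos; [| left; apply Rinv_0_lt_compat; apply pow_lt; lra].
    assert (0 <= gam ^ 2) by apply pow2_ge_0. assert (0 <= bet ^ 2) by apply pow2_ge_0. lra. }
  set (C0 := K1 + gam * (2 / bet) + 2 + 2 / a + 1 + M * (2 / a) + gam * L * (2 / a)
             + bet * (2 / a) + K2 + gam * (2 / mu) + bet * (2 / mu)).
  assert (T1 : 0 <= gam * (2 / bet)) by (apply Rmult_le_pos; lra).
  assert (T2 : 0 <= M * (2 / a)) by (apply Rmult_le_pos; lra).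
  assert (T3 : 0 <= gam * L * (2 / a)) by (apply Rmult_le_pos; [apply Rmult_le_pos|]; lra).
  assert (T4 : 0 <= bet * (2 / a)) by (apply Rmult_le_pos; lra).
  assert (T5 : 0 <= gam * (2 / mu)) by (apply Rmult_le_pos; lra).
  assert (T6 : 0 <= bet * (2 / mu)) by (apply Rmult_le_pos; lra).
  exists C0, c. split; [unfold C0; lra|]. split; [exact Hc0|].
  intros t k Ht Hne i j Hi Hj.
  destruct (knorm_facts k) as [Hn0 [_ Hkm]].
  rewrite Nmat_unfold.
  split; [|split].
  -
    intro Hs.
    assert (Hn1 : knorm k <= 1) by lra.
    assert (Hnb : mu * knorm k <= bet).
    { apply Rmult_le_reg_r with (/ mu); [apply Rinv_0_lt_compat; lra|].
      replace (mu * knorm k * / mu) with (knorm k) by (field; lra).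
      replace (bet * / mu) with (bet / mu) by reflexivity. lra. }
    destruct (small_region gam bet mu t k Hg Hb Hm Ht Hn1 Hnb) as [H1 [H2 H3]].
    set (e := exp (- (1/2) * mu * knorm k ^ 2 * t)) in *.
    fold K1 in H2, H3.
    assert (He : 0 < e) by apply exp_pos.
    rewrite pat7_scale. apply Nm_pat; auto.
    + eapply Rle_trans; [exact H2|]. rewrite Rmult_1_r. apply Rmult_le_compat_r; [lra|]. unfold C0; lra.
    + intros m Hm3. apply bound_k with (2 / bet); auto using Cmod_ge_0; try lra.
      split; [apply Rabs_pos| auto]. unfold C0; lra.
    + intros m Hm3. apply bound_k with (2 / bet); auto using Cmod_ge_0; try lra.
      split; [apply Rabs_pos| auto]. unfold C0; lra.
    + eapply Rle_trans; [exact H3|]. rewrite Rmult_1_r. apply Rmult_le_compat_r; [lra|]. unfold C0; lra.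
    + apply le_scale2 with (2 / bet); auto; try lra.
      replace (bet * (2 / bet)) with 2 by (field; lra). unfold C0; lra.
    + apply le_scale2 with (2 / bet); auto; try lra.
      replace (bet * (2 / bet)) with 2 by (field; lra). unfold C0; lra.
    + eapply Rle_trans; [exact H2|]. rewrite Rmult_1_r. apply Rmult_le_compat_r; [lra|]. unfold C0; lra.
  -
    intro Hreg.
    destruct (mid_region gam bet mu t k eps L Hg Hb Hm Ht He0 Hreg Hne) as [H1 [H2 H3]].
    fold a M in H1, H2, H3.
    set (X := exp (- c * t)).
    assert (HX : 0 < X) by apply exp_pos.
    assert (Hea : exp (- a * t) <= X).
    { apply exp_le_exp. apply Rmult_le_compat_r; lra. }
    assert (Hte : t * exp (- a * t) <= 2 / a * X).
    { eapply Rle_trans; [apply te_bound; lra|]. apply Rmult_le_compat_l; [lra|].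
      apply exp_le_exp. apply Rmult_le_compat_r; lra. }
    assert (HE1 : Cmod (E1' (lam_p gam bet mu k) (lam_m gam bet mu k) t) <= 2 / a * X) by lra.
    assert (HMt : M * (t * exp (- a * t)) <= M * (2 / a * X)) by (apply Rmult_le_compat_l; lra).
    assert (HA : Cmod (Ea' (lam_p gam bet mu k) (lam_m gam bet mu k) t) <= (1 + M * (2 / a)) * X) by lra.
    assert (HB : Cmod (Eb' (lam_p gam bet mu k) (lam_m gam bet mu k) t) <= (1 + M * (2 / a)) * X) by lra.
    assert (HC1 : 1 + M * (2 / a) <= C0) by (unfold C0; lra).
    assert (Hkg : forall m, (m < 3)%nat -> gam * Rabs (k m) * (2 / a) <= C0).
    { intros m Hm3. assert (Hk := Hkm m Hm3).
      assert (gam * Rabs (k m) <= gam * L) by (apply Rmult_le_compat_l; lra).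
      assert (gam * Rabs (k m) * (2 / a) <= gam * L * (2 / a)) by (apply Rmult_le_compat_r; lra).
      unfold C0; lra. }
    rewrite pat7_scale. apply Nm_pat; auto.
    + apply le_scale1 with (1 + M * (2 / a)); lra.
    + intros m Hm3. apply le_scale2 with (2 / a); auto; try lra.
      apply Rmult_le_pos; [lra| apply Rabs_pos].
    + intros m Hm3. apply le_scale2 with (2 / a); auto; try lra.
      apply Rmult_le_pos; [lra| apply Rabs_pos].
    + apply le_scale1 with (1 + M * (2 / a)); lra.
    + apply le_scale2 with (2 / a); auto; try lra. unfold C0; lra.
    + apply le_scale2 with (2 / a); auto; try lra. unfold C0; lra.
    + apply le_scale1 with (1 + M * (2 / a)); lra.
  -
    intro HL.
    assert (Hn1 : 1 <= knorm k) by lra.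
    assert (Hn3 : 3 * (gam + bet) / mu <= knorm k) by (unfold L in HL; lra).
    assert (Hcg : c <= gam ^ 2 / mu) by lra.
    destruct (large_region gam bet mu t k c Hg Hb Hm Ht Hn1 Hn3 Hc0 Hcg Hc2) as [H1 [H2 H3]].
    fold K2 in H2, H3.
    set (X := exp (- c * t)) in *.
    set (Y := exp (- c * knorm k ^ 2 * t)) in *.
    set (w := / knorm k ^ 2) in *.
    set (z := / knorm k) in *.
    assert (HX : 0 < X) by apply exp_pos.
    assert (HY : 0 < Y) by apply exp_pos.
    assert (Hw : 0 < w) by (apply Rinv_0_lt_compat; apply pow_lt; lra).
    assert (Hz : 0 < z) by (apply Rinv_0_lt_compat; lra).
    assert (HwX : 0 <= w * X) by (apply Rmult_le_pos; lra).
    assert (HwY : 0 <= w * Y) by (apply Rmult_le_pos; lra).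
    assert (HzX : 0 <= z * X) by (apply Rmult_le_pos; lra).
    assert (HzY : 0 <= z * Y) by (apply Rmult_le_pos; lra).
    assert (HK2C : K2 <= C0) by (unfold C0; lra).
    assert (H2C : 2 <= C0) by (unfold C0; lra).
    assert (A1 : K2 * (w * Y) <= C0 * (w * Y)) by (apply Rmult_le_compat_r; lra).
    assert (A2 : K2 * (w * X) <= C0 * (w * X)) by (apply Rmult_le_compat_r; lra).
    assert (A3 : 2 * X <= C0 * X) by (apply Rmult_le_compat_r; lra).
    assert (A4 : 2 * Y <= C0 * Y) by (apply Rmult_le_compat_r; lra).
    assert (HE0 := Cmod_ge_0 (E1' (lam_p gam bet mu k) (lam_m gam bet mu k) t)).
    assert (Hk : forall m, (m < 3)%nat ->
              gam * Rabs (k m) * Cmod (E1' (lam_p gam bet mu k) (lam_m gam bet mu k) t)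
              <= C0 * (z * X + z * Y)).
    { intros m Hm3. assert (Hkm3 := Hkm m Hm3).
      assert (S1 : gam * Rabs (k m) <= gam * knorm k) by (apply Rmult_le_compat_l; lra).
      assert (S2 : gam * Rabs (k m) * Cmod (E1' (lam_p gam bet mu k) (lam_m gam bet mu k) t)
                   <= gam * knorm k * Cmod (E1' (lam_p gam bet mu k) (lam_m gam bet mu k) t))
        by (apply Rmult_le_compat_r; lra).
      assert (S3 : gam * knorm k * Cmod (E1' (lam_p gam bet mu k) (lam_m gam bet mu k) t)
                   <= gam * knorm k * (2 / mu * w * (X + Y)))
        by (apply Rmult_le_compat_l; [apply Rmult_le_pos|]; lra).
      assert (S4 : gam * knorm k * (2 / mu * w * (X + Y)) = gam * (2 / mu) * (z * X + z * Y))
        by (unfold w, z; field; lra).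
      assert (S5 : gam * (2 / mu) * (z * X + z * Y) <= C0 * (z * X + z * Y))
        by (apply Rmult_le_compat_r; [lra| unfold C0; lra]).
      lra. }
    assert (Hbe : bet * Cmod (E1' (lam_p gam bet mu k) (lam_m gam bet mu k) t)
                  <= C0 * (w * X + w * Y)).
    { assert (S3 : bet * Cmod (E1' (lam_p gam bet mu k) (lam_m gam bet mu k) t)
                   <= bet * (2 / mu * w * (X + Y))) by (apply Rmult_le_compat_l; lra).
      assert (S4 : bet * (2 / mu * w * (X + Y)) = bet * (2 / mu) * (w * X + w * Y)) by ring.
      assert (S5 : bet * (2 / mu) * (w * X + w * Y) <= C0 * (w * X + w * Y))
        by (apply Rmult_le_compat_r; [lra| unfold C0; lra]).
      lra. }
    rewrite pat7_lin. apply Nm_pat; auto; lra.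
Qed.
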